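(* Let $(X,T)$ be a topological dynamical system and $x\in X$. Then for every non-atomic $T$-invariant Borel probability measure $\mu$ on $X$, $\mu(BP(x))=0$, where $BP(x)=\{y\in X:(x,y)\text{ is Banach proximal}\}$.
   Context: A topological dynamical system $(X,T)$ consists of a non-empty compact metric space $(X,d)$ and a continuous map $T:X\to X$. A measure $\mu$ is non-atomic if $\mu(\{z\})=0$ for every $z\in X$. A set $F\subset\mathbb{Z}_+$ has Banach density one if for every $\lambda<1$ there is $N\ge1$ with $\#(F\cap I)\ge\lambda\,\#(I)$ for every interval of integers $I\subset\mathbb{Z}_+$ with $\#(I)\ge N$. A pair $(x,y)$ is Banach proximal if for every $\varepsilon>0$ the set $\{n\in\mathbb{Z}_+: d(T^nx,T^ny)<\varepsilon\}$ has Banach density one. *)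

(* Defs.v *)
From HB Require Import structures.
From mathcomp Require Import all_boot all_order all_algebra.
From mathcomp Require Import all_classical all_reals all_analysis.
Set Implicit Arguments. Unset Strict Implicit. Unset Printing Implicit Defensive.
Import Order.TTheory GRing.Theory Num.Theory.
Local Open Scope classical_set_scope.
Local Open Scope ring_scope.

Notation borel X := (g_sigma_algebraType (@open X)).

Definition banach_density_one (R : realType) (F : set nat) : Prop :=
  forall lam : R, lam < 1 ->
    exists N : nat, (1 <= N)%N /\
      forall a k : nat, (N <= k)%N ->
        lam * k%:R <= \sum_(a <= n < a + k | n \in F) (1 : R).

Definition banach_proximal (R : realType) (X : pseudoPMetricType R)
    (T : X -> X) (x y : X) : Prop :=
  forall eps : R, 0 < eps ->
    banach_density_one R [set n : nat | ball (iter n T x) eps (iter n T y)].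

Definition BP (R : realType) (X : pseudoPMetricType R) (T : X -> X) (x : X)
  : set X := [set y | banach_proximal T x y].

(* Main.v *)
Require Import Defs.
From HB Require Import structures.
From mathcomp Require Import all_boot all_order all_algebra.
From mathcomp Require Import all_classical all_reals all_analysis.
From mathcomp Require Import measurable_realfun lra.
Import Order.TTheory GRing.Theory Num.Theory.
Local Open Scope classical_set_scope.
Local Open Scope ring_scope.
Set Implicit Arguments. Unset Strict Implicit.

Lemma open_mb (X : ptopologicalType) (A : set X) :
  open A -> measurable (A : set (borel X)).
Proof. by move=> oA; apply: sub_sigma_algebra. Qed.

Lemma iter_cont (X : topologicalType) (T : X -> X) :
  continuous T -> forall n, continuous (iter n T).
Proof.
move=> cT; elim=> [|n IH] z /=; first exact: cvg_id.
exact: (continuous_comp (IH z) (cT _)).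
Qed.

Lemma ball_int (R : realType) (X : pseudoPMetricType R) (y z : X) (e : R) :
  0 < e -> ball y (e/2) z -> (ball y e)^° z.
Proof.
move=> e0 h; rewrite /interior.
apply: filterS (nbhsx_ballx z (e/2) _); last by rewrite divr_gt0.
move=> w bzw; have := ball_triangle h bzw; by rewrite -splitr.
Qed.

Lemma int_ball_center (R : realType) (X : pseudoPMetricType R) (y : X) (e : R) :
  0 < e -> (ball y e)^° y.
Proof. move=> e0; apply: ball_int => //; apply: ballxx; by rewrite divr_gt0. Qed.

Definition Ui (R : realType) (X : pseudoPMetricType R) (T : X -> X) (x : X)
  (e : R) (n : nat) : set X := (iter n T) @^-1` (ball (iter n T x) e)^°.

Lemma Ui_open (R : realType) (X : pseudoPMetricType R) (T : X -> X) (x : X) e n :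
  continuous T -> open (Ui T x e n).
Proof.
move=> cT; apply: open_comp; last exact: open_interior.
by move=> z _; apply: iter_cont.
Qed.

Definition cnt (R : realType) (X : pseudoPMetricType R) (T : X -> X) (x : X)
  (e : R) (a k : nat) (y : X) : R := \sum_(a <= n < a + k) \1_(Ui T x e n) y.

Definition cntD (R : realType) (X : pseudoPMetricType R) (T : X -> X) (x : X)
  (e : R) (a k : nat) (y : X) : R :=
  \sum_(a <= n < a + k | n \in [set n : nat | ball (iter n T x) e (iter n T y)]) (1 : R).

Lemma cntD_le_cnt (R : realType) (X : pseudoPMetricType R) (T : X -> X) (x : X) e a k y :
  0 < e -> cntD T x (e/2) a k y <= cnt T x e a k y.
Proof.
move=> e0; rewrite /cntD /cnt big_mkcond /=; apply: ler_sum => n _.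
rewrite indicE; case: ifP => //; rewrite in_setE /= => h.
rewrite mem_set //; rewrite /Ui /=; exact: ball_int.
Qed.

Lemma cnt_le_cntD (R : realType) (X : pseudoPMetricType R) (T : X -> X) (x : X) e e' a k y :
  e <= e' -> cnt T x e a k y <= cntD T x e' a k y.
Proof.
move=> ee; rewrite /cntD /cnt [X in _ <= X]big_mkcond /=; apply: ler_sum => n _.
rewrite indicE; case: (boolP (y \in _)); rewrite ?in_setE /= => h.
  rewrite mem_set //= ; apply: (le_ball ee); exact: interior_subset.
by case: ifP.
Qed.

Lemma cnt_ge0 (R : realType) (X : pseudoPMetricType R) (T : X -> X) (x : X) e a k y :
  0 <= cnt T x e a k y.
Proof. by apply: sumr_ge0 => n _; rewrite indicE. Qed.

Lemma cnt_mfun (R : realType) (X : pseudoPMetricType R) (T : X -> X) (x : X) e a k :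
  continuous T -> measurable_fun setT (cnt T x e a k : borel X -> R).
Proof.
move=> cT; apply: measurable_sum => n.
apply: measurable_indic; apply: open_mb; exact: Ui_open.
Qed.

Lemma meas_ge (X : ptopologicalType) (R : realType) (f : borel X -> R) c :
  measurable_fun setT f -> measurable ([set y | c <= f y] : set (borel X)).
Proof.
move=> mf; have := mf measurableT _ (measurable_itv `[c, +oo[).
rewrite setTI; congr measurable; apply/seteqP; split => y /=;
  by rewrite in_itv /= andbT.
Qed.

Lemma small_inv (R : realType) (e : R) : 0 < e -> exists m : nat, (m.+1%:R)^-1 < e.
Proof.
move=> e0; exists (Num.trunc e^-1).
rewrite -[X in _ < X]invrK ltf_pV2; first exact: truncnS_gt.
  by rewrite posrE.
by rewrite posrE invr_gt0.
Qed.

Definition BPset (R : realType) (X : pseudoPMetricType R) (T : X -> X) (x : X) : set X :=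
  \bigcap_m \bigcap_j \bigcup_N
    (if (1 <= N)%N then \bigcap_a \bigcap_k
       (if (N <= k)%N then
          [set y | (1 - (j.+1%:R)^-1) * k%:R <= cnt T x ((m.+1%:R)^-1) a k y]
        else setT)
     else set0).

Lemma BPsetE (R : realType) (X : pseudoPMetricType R) (T : X -> X) (x : X) :
  BP T x = BPset T x.
Proof.
apply/seteqP; split => y.
- move=> hy m _ j _.
  have e0 : 0 < ((m.+1%:R)^-1 : R) by rewrite invr_gt0.
  have l1 : (1 - (j.+1%:R)^-1 : R) < 1 by rewrite ltrBlDr ltrDl invr_gt0.
  have [N [N1 HN]] := hy _ (divr_gt0 e0 (ltr0n _ 2)) _ l1.
  exists N => //; rewrite N1 => a _ k _; case: ifP => // Nk /=.
  apply: le_trans (HN a k Nk) _; exact: cntD_le_cnt.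
- move=> hy e e0 lam lam1.
  have [m hm] := small_inv e0.
  have lp : 0 < 1 - lam by rewrite subr_gt0.
  have [j hj] := small_inv lp.
  have [N _] := hy m I j I.
  case: ifP => N1 // HN; exists N; split => // a k Nk.
  have := HN a I k I; rewrite Nk /= => h.
  change (lam * k%:R <= cntD T x e a k y).
  apply: le_trans (cnt_le_cntD T x a k y (ltW hm)).
  apply: le_trans h; apply: ler_wpM2r => //.
  by rewrite lerBrDr addrC -lerBrDr ltW.
Qed.

Lemma BP_meas (R : realType) (X : pseudoPMetricType R) (T : X -> X) (x : X) :
  continuous T -> measurable (BP T x : set (borel X)).
Proof.
move=> cT; rewrite BPsetE; apply: bigcapT_measurable => m.
apply: bigcapT_measurable => j; apply: bigcupT_measurable => N.
case: ifP => _; last exact: measurable0.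
apply: bigcapT_measurable => a; apply: bigcapT_measurable => k.
case: ifP => _; last exact: measurableT.
apply: meas_ge; exact: cnt_mfun.
Qed.

Lemma inv_iter (R : realType) (X : pseudoPMetricType R) (T : X -> X)
  (contT : continuous T) (mu : probability (borel X) R)
  (invT : forall A : set (borel X), measurable A -> mu (T @^-1` A) = mu A)
  n (A : set X) : open A -> mu (iter n T @^-1` A) = mu A.
Proof.
elim: n A => [|n IH] A oA; first by [].
have -> : iter n.+1 T @^-1` A = iter n T @^-1` (T @^-1` A) by [].
rewrite IH; first by apply: invT; exact: open_mb.
by apply: open_comp => // z _; exact: contT.
Qed.

Lemma small_balls (R : realType) (X : pseudoPMetricType R)
  (hausX : hausdorff_space X) (compX : compact [set: X])
  (mu : probability (borel X) R)
  (nonatomic : forall z : borel X, mu [set z] = 0%E) (eta : R) :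
  0 < eta -> exists2 d : R, 0 < d & forall z : X, (mu ((ball z d)^°) <= eta%:E)%E.
Proof.
move=> eta0; apply: contrapT => H.
have Hz : forall m : nat, exists z : X, (eta%:E < mu ((ball z (m.+1%:R^-1))^°))%E.
  move=> m; apply: contrapT => hm; apply: H; exists (m.+1%:R^-1).
    by rewrite invr_gt0.
  move=> z; rewrite leNgt; apply/negP => hz; apply: hm; by exists z.
have [z hz] := choice Hz.
have [w [_ cw]] := compX (z @ \oo) _ filterT.
have big : forall r : R, 0 < r -> (eta%:E < mu ((ball w r)^°))%E.
  move=> r r0.
  have r4 : 0 < r / 4 by rewrite divr_gt0.
  have [M hM] := small_inv r4.
  have ev : (z @ \oo) [set y | exists2 m, (M <= m)%N & y = z m].
    by exists M => // n hn; exists n.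
  have [y [[m hm ->] bwz]] := cw _ _ ev (nbhsx_ballx w (r/4) r4).
  apply: lt_le_trans (hz m) _; apply: le_measure; rewrite ?inE.
  + apply: open_mb; exact: open_interior.
  + apply: open_mb; exact: open_interior.
  move=> q /interior_subset bq; apply: ball_int => //.
    have := ball_triangle bwz bq; apply: le_ball.
    have : (m.+1%:R^-1 : R) <= M.+1%:R^-1.
      by rewrite lef_pV2 ?posrE // ler_nat.
    move=> h; have h2 := le_lt_trans h hM; clear -h2 r0; move: (m.+1%:R^-1) h2 => a h2; lra.
pose F n := (ball w (n.+1%:R^-1))^° : set (borel X).
have mF n : measurable (F n) by apply: open_mb; exact: open_interior.
have FE : \bigcap_n F n = [set w].
  apply/seteqP; split => y; last first.
    by move=> -> n _; apply: int_ball_center; rewrite invr_gt0.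
  move=> hy; apply: esym; apply: hausX => A B /nbhs_ballP [r r0 hA] /nbhs_ballP [s s0 hB].
  have [n hn] := small_inv r0.
  exists y; split; last by apply: hB; exact: ballxx.
  apply: hA; apply: (le_ball (ltW hn)); apply: interior_subset; exact: hy.
have L := @nonincreasing_cvg_mu _ _ _ mu F.
have L' : (mu \o F) @ \oo --> mu (\bigcap_n F n).
  apply: L => //.
  - rewrite (le_lt_trans (probability_le1 _ (mF 0%N))) //. exact: ltry.
  - exact: bigcapT_measurable.
  - move=> n1 n2 hn; apply/subsetPset; apply: interiorS; apply: le_ball.
    by rewrite lef_pV2 ?posrE // ler_nat.
have : (eta%:E <= mu (\bigcap_n F n))%E.
  rewrite -(cvg_lim _ L') //; apply: lime_ge; first exact: cvgP L'.
  by apply: nearW => n /=; apply: ltW; apply: big; rewrite invr_gt0.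
rewrite FE nonatomic lee_fin leNgt eta0 //.
Qed.

Lemma E_bound (R : realType) (X : pseudoPMetricType R) (T : X -> X)
  (contT : continuous T) (x : X) (mu : probability (borel X) R)
  (invT : forall A : set (borel X), measurable A -> mu (T @^-1` A) = mu A)
  (d eta : R) (d0 : 0 < d)
  (hd : forall z : X, (mu ((ball z d)^°) <= eta%:E)%E) (k : nat) :
  (0 < k)%N ->
  (mu ([set y | (2^-1 * k%:R <= cnt T x d 0 k y)%R] : set (borel X)) <= (2 * eta)%:E)%E.
Proof.
move=> k0.
set D := [set y | _ <= _].
have mD : measurable (D : set (borel X)) by apply: meas_ge; exact: cnt_mfun.
have mU n : measurable (Ui T x d n : set (borel X)) by apply: open_mb; exact: Ui_open.
have I1 : (\int[mu]_(y in setT) (cnt T x d 0 k y)%:E =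
           \sum_(0 <= n < 0 + k) mu (Ui T x d n))%E.
  under eq_integral do rewrite /cnt -sumEFin.
  rewrite ge0_integral_sum //.
  - by apply: eq_bigr => n _; rewrite integral_indic // setIT.
  - by move=> n; apply/measurable_EFinP; exact: measurable_indic.
have I2 : (\int[mu]_(y in setT) ((2^-1 * k%:R)%:E * (\1_D y)%:E) <=
           \int[mu]_(y in setT) (cnt T x d 0 k y)%:E)%E.
  apply: ge0_le_integral => //.
  - apply: measurable_funeM; apply/measurable_EFinP; exact: measurable_indic.
  - apply/measurable_EFinP; exact: cnt_mfun.
  - move=> y _; rewrite -EFinM lee_fin indicE.
    case: (boolP (y \in D)) => [/set_mem hy|_]; first by rewrite mulr1.
    by rewrite mulr0 cnt_ge0.
have I3 : (\int[mu]_(y in setT) ((2^-1 * k%:R)%:E * (\1_D y)%:E) =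
           (2^-1 * k%:R)%:E * mu D)%E.
  rewrite ge0_integralZl_EFin //.
  - by rewrite integral_indic // setIT.
  - apply/measurable_EFinP; exact: measurable_indic.
have I4 : (\sum_(0 <= n < 0 + k) mu (Ui T x d n) <= (k%:R * eta)%:E)%E.
  apply: le_trans (_ : (\sum_(0 <= n < 0 + k) eta%:E <= _)%E).
    apply: lee_sum => n _; rewrite /Ui (inv_iter contT invT); [exact: hd | exact: open_interior].
  by rewrite sumEFin sumr_const_nat add0n subn0 mulr_natl.
move: I2; rewrite I1 I3 => I2.
have := le_trans I2 I4.
have fD : mu D \is a fin_num by apply: fin_num_measure.
rewrite -(fineK fD) -EFinM !lee_fin.
have kp : (0 : R) < k%:R by rewrite ltr0n.
move: (fine (mu D)) (k%:R : R) kp => a kk kp h.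
nra.
Qed.

Unset Implicit Arguments. Set Strict Implicit.

Theorem mainTheorem14 (R : realType) (X : pseudoPMetricType R)
  (hausX : hausdorff_space X) (compX : compact [set: X])
  (T : X -> X) (contT : continuous T) (x : X)
  (mu : probability (borel X) R)
  (invT : forall A : set (borel X), measurable A ->
            mu (T @^-1` A) = mu A)
  (nonatomic : forall z : borel X, mu [set z] = 0%E) :
  measurable (BP T x : set (borel X)) /\ mu (BP T x) = 0%E.
Proof.
have mBP := BP_meas x contT.
split => //.
apply/eqP; rewrite eq_le measure_ge0 andbT; apply/lee_addgt0Pr => eta eta0.
rewrite add0e.
have eta2 : 0 < eta / 2 by rewrite divr_gt0.
have [d d0 hd] := small_balls hausX compX nonatomic eta2.
pose E N : set (borel X) := \bigcap_k
  (if (N <= k)%N then [set y | 2^-1 * k%:R <= cnt T x d 0 k y] else setT).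
have mE N : measurable (E N).
  apply: bigcapT_measurable => k; case: ifP => _; last exact: measurableT.
  apply: meas_ge; exact: cnt_mfun.
have bE N : (mu (E N) <= eta%:E)%E.
  apply: le_trans (_ : (mu [set y | (2^-1 * N.+1%:R <= cnt T x d 0 N.+1 y)%R] <= _)%E).
    apply: le_measure; rewrite ?inE //; first by apply: meas_ge; exact: cnt_mfun.
    by move=> y hy; have := hy N.+1 I; rewrite leqnSn.
  have -> : eta = 2 * (eta / 2) by rewrite mulrC divfK.
  exact: (E_bound contT x invT d0 hd (ltn0Sn N)).
have sub : BP T x `<=` \bigcup_N E N.
  move=> y hy.
  have d2 : 0 < d / 2 by rewrite divr_gt0.
  have l1 : (2^-1 : R) < 1 by rewrite invf_lt1 // ltr1n.
  have [N [_ HN]] := hy _ d2 _ l1.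
  exists N => // k _; case: ifP => // Nk /=.
  apply: le_trans (HN 0%N k Nk) _; exact: cntD_le_cnt.
have mU : measurable (\bigcup_N E N) by exact: bigcupT_measurable.
apply: (@le_trans _ _ (mu (\bigcup_N E N))); first by apply: le_measure; rewrite ?inE.
have L : (mu \o E) @ \oo --> mu (\bigcup_N E N).
  apply: nondecreasing_cvg_mu => //.
  move=> n1 n2 hn; apply/subsetPset => y hy k _.
  case: ifP => // h2; have := hy k I; rewrite (leq_trans hn h2) //.
rewrite -(cvg_lim _ L) //; apply: lime_le; first exact: cvgP L.
exact: nearW.
Qed.
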